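(* Let $X$ be a real lush Banach space. Then $n_L(X)=1$.
   Context: A real Banach space $X$ is lush if for every $x,y\in S_X$ and every $\varepsilon>0$ there is $y^*\in S_{X^*}$ such that, with the slice $S=S(y^*,\varepsilon)=\{z\in B_X: y^*(z)>1-\varepsilon\}$, one has $y\in S$ and $\mathrm{dist}(x,\mathrm{aco}(S))<\varepsilon$, where $\mathrm{aco}(S)$ is the absolutely convex hull of $S$. $\mathrm{Lip}_0(X)$ is the set of Lipschitz maps $T:X\to X$ with $T(0)=0$, with $\|T\|_L=\sup\{\|Tx-Ty\|/\|x-y\|: x\neq y\}$. $D(x)=\{x^*\in X^*: x^*(x)=\|x^*\|\|x\|=\|x\|^2\}$; $\omega(T)=\sup\{|f(Tx-Ty)|/\|x-y\|^2: x\neq y,\ f\in D(x-y)\}$; $n_L(X)=\inf\{\omega(T): T\in\mathrm{Lip}_0(X),\ \|T\|_L=1\}$. *)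

(* Defs.v *)
From Stdlib Require Import Reals Lra List.
Open Scope R_scope.

Record NormedSpace := {
  car :> Type;
  vzero : car;
  vadd : car -> car -> car;
  vopp : car -> car;
  vscal : R -> car -> car;
  vnorm : car -> R;
  vadd_assoc : forall x y z, vadd x (vadd y z) = vadd (vadd x y) z;
  vadd_comm : forall x y, vadd x y = vadd y x;
  vadd_0l : forall x, vadd vzero x = x;
  vadd_oppl : forall x, vadd (vopp x) x = vzero;
  vscal_assoc : forall a b x, vscal a (vscal b x) = vscal (a * b) x;
  vscal_1 : forall x, vscal 1 x = x;
  vscal_distr_v : forall a x y, vscal a (vadd x y) = vadd (vscal a x) (vscal a y);
  vscal_distr_s : forall a b x, vscal (a + b) x = vadd (vscal a x) (vscal b x);
  vnorm_eq0 : forall x, vnorm x = 0 <-> x = vzero;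
  vnorm_scal : forall a x, vnorm (vscal a x) = Rabs a * vnorm x;
  vnorm_triangle : forall x y, vnorm (vadd x y) <= vnorm x + vnorm y
}.

Arguments vzero {_}.
Arguments vadd {_} _ _.
Arguments vopp {_} _.
Arguments vscal {_} _ _.
Arguments vnorm {_} _.

Definition vsub {X : NormedSpace} (x y : X) : X := vadd x (vopp y).

Definition complete (X : NormedSpace) : Prop :=
  forall u : nat -> X,
    (forall eps, 0 < eps -> exists N, forall n m, (N <= n)%nat -> (N <= m)%nat ->
        vnorm (vsub (u n) (u m)) < eps) ->
    exists l : X, forall eps, 0 < eps -> exists N, forall n, (N <= n)%nat ->
        vnorm (vsub (u n) l) < eps.

Definition in_dual (X : NormedSpace) (f : X -> R) : Prop :=
  (forall x y, f (vadd x y) = f x + f y) /\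
  (forall a x, f (vscal a x) = a * f x) /\
  (exists M, forall x, Rabs (f x) <= M * vnorm x).

Definition dual_norm_is {X : NormedSpace} (f : X -> R) (c : R) : Prop :=
  is_lub (fun r => exists x : X, vnorm x <= 1 /\ r = Rabs (f x)) c.

Definition in_dual_sphere {X : NormedSpace} (f : X -> R) : Prop :=
  in_dual X f /\ dual_norm_is f 1.

Definition slice {X : NormedSpace} (ystar : X -> R) (eps : R) (z : X) : Prop :=
  vnorm z <= 1 /\ ystar z > 1 - eps.

Fixpoint lincomb {X : NormedSpace} (l : list (R * X)) : X :=
  match l with
  | nil => vzero
  | (a, s) :: l' => vadd (vscal a s) (lincomb l')
  end.

Fixpoint sum_abs_coef {X : NormedSpace} (l : list (R * X)) : R :=
  match l with
  | nil => 0
  | (a, _) :: l' => Rabs a + sum_abs_coef l'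
  end.

Definition aco {X : NormedSpace} (S : X -> Prop) (z : X) : Prop :=
  exists l : list (R * X),
    (forall p, In p l -> S (snd p)) /\ sum_abs_coef l <= 1 /\ z = lincomb l.

(** dist(x, A) < eps  (dist = inf over A of ||x - a||; this is its unfolding). *)
Definition dist_lt {X : NormedSpace} (x : X) (A : X -> Prop) (eps : R) : Prop :=
  exists a, A a /\ vnorm (vsub x a) < eps.

Definition lush (X : NormedSpace) : Prop :=
  forall x y : X, vnorm x = 1 -> vnorm y = 1 ->
  forall eps, 0 < eps ->
  exists ystar : X -> R,
    in_dual_sphere ystar /\
    slice ystar eps y /\
    dist_lt x (aco (slice ystar eps)) eps.

Definition Lip0 {X : NormedSpace} (T : X -> X) : Prop :=
  T vzero = vzero /\
  exists K, forall x y : X, vnorm (vsub (T x) (T y)) <= K * vnorm (vsub x y).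

Definition lip_norm_is {X : NormedSpace} (T : X -> X) (c : R) : Prop :=
  is_lub (fun r => exists x y : X, x <> y /\
                     r = vnorm (vsub (T x) (T y)) / vnorm (vsub x y)) c.

Definition in_D {X : NormedSpace} (x : X) (f : X -> R) : Prop :=
  in_dual X f /\
  exists c, dual_norm_is f c /\ f x = c * vnorm x /\ c * vnorm x = vnorm x ^ 2.

Definition omega_is {X : NormedSpace} (T : X -> X) (w : R) : Prop :=
  is_lub (fun r => exists (x y : X) (f : X -> R),
            x <> y /\ in_D (vsub x y) f /\
            r = Rabs (f (vsub (T x) (T y))) / (vnorm (vsub x y) ^ 2)) w.

Definition is_glb (E : R -> Prop) (m : R) : Prop :=
  (forall r, E r -> m <= r) /\ (forall b, (forall r, E r -> b <= r) -> b <= m).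

Definition nonlinear_numerical_index_is (X : NormedSpace) (m : R) : Prop :=
  is_glb (fun w => exists T : X -> X, Lip0 T /\ lip_norm_is T 1 /\ omega_is T w) m.

(* Main.v *)
Require Import Defs.
From Stdlib Require Import Reals Lra List.
From Stdlib Require Import ClassicalEpsilon Classical.
From mathcomp Require boolp classical_sets.
Open Scope R_scope.

Lemma vadd_0r {X : NormedSpace} (x : X) : vadd x vzero = x.
Proof. rewrite vadd_comm. apply vadd_0l. Qed.

Lemma vadd_oppr {X : NormedSpace} (x : X) : vadd x (vopp x) = vzero.
Proof. rewrite vadd_comm. apply vadd_oppl. Qed.

Lemma vnorm0 {X : NormedSpace} : vnorm (@vzero X) = 0.
Proof. apply vnorm_eq0. reflexivity. Qed.

Lemma vscal_0 {X : NormedSpace} (x : X) : vscal 0 x = vzero.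
Proof. apply vnorm_eq0. rewrite vnorm_scal, Rabs_R0. ring. Qed.

Lemma vscal_zero {X : NormedSpace} (a : R) : vscal a (@vzero X) = vzero.
Proof. apply vnorm_eq0. rewrite vnorm_scal, vnorm0. ring. Qed.

Lemma vopp_unique {X : NormedSpace} (a x : X) : vadd a x = vzero -> a = vopp x.
Proof.
  intro H. rewrite <- (vadd_0r a), <- (vadd_oppr x), vadd_assoc, H. apply vadd_0l.
Qed.

Lemma vopp_scal {X : NormedSpace} (x : X) : vopp x = vscal (-1) x.
Proof.
  symmetry. apply vopp_unique. rewrite <- (vscal_1 _ x) at 2.
  rewrite <- vscal_distr_s. replace (-1+1) with 0 by ring. apply vscal_0.
Qed.

Lemma vnorm_opp {X : NormedSpace} (x : X) : vnorm (vopp x) = vnorm x.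
Proof. rewrite vopp_scal, vnorm_scal. rewrite Rabs_left by lra. ring. Qed.

Lemma vnorm_nonneg {X : NormedSpace} (x : X) : 0 <= vnorm x.
Proof.
  pose proof (vnorm_triangle _ x (vopp x)) as H.
  rewrite vadd_oppr, vnorm0, vnorm_opp in H. lra.
Qed.

Lemma vsub_eq0 {X : NormedSpace} (x y : X) : vsub x y = vzero -> x = y.
Proof.
  unfold vsub. intro H. rewrite <- (vadd_0r x), <- (vadd_oppl _ y), vadd_assoc, H.
  apply vadd_0l.
Qed.

Lemma vsub_diag {X : NormedSpace} (x : X) : vsub x x = vzero.
Proof. apply vadd_oppr. Qed.

Lemma vsub_0r {X : NormedSpace} (x : X) : vsub x vzero = x.
Proof. unfold vsub. rewrite <- (vadd_0r x) at 2. f_equal. symmetry. apply vopp_unique. apply vadd_0l. Qed.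

Lemma vopp_add {X : NormedSpace} (x y : X) : vopp (vadd x y) = vadd (vopp x) (vopp y).
Proof. rewrite !vopp_scal. apply vscal_distr_v. Qed.

Lemma vopp_opp {X : NormedSpace} (x : X) : vopp (vopp x) = x.
Proof. symmetry. apply vopp_unique. apply vadd_oppr. Qed.

Lemma vscal_opp {X : NormedSpace} (a : R) (x : X) : vscal a (vopp x) = vopp (vscal a x).
Proof. rewrite !vopp_scal, !vscal_assoc. f_equal. ring. Qed.

Lemma vsub_addl {X : NormedSpace} (a u : X) : vsub (vadd a u) a = u.
Proof.
  unfold vsub. rewrite (vadd_comm _ a u), <- vadd_assoc, vadd_oppr. apply vadd_0r.
Qed.

Lemma vsub_add2 {X : NormedSpace} (a u v : X) : vsub (vadd a u) (vadd a v) = vsub u v.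
Proof.
  unfold vsub. rewrite vopp_add.
  rewrite (vadd_comm _ a u), <- vadd_assoc. f_equal.
  rewrite vadd_assoc, vadd_oppr. apply vadd_0l.
Qed.

Lemma vnorm_sub_sym {X : NormedSpace} (x y : X) : vnorm (vsub x y) = vnorm (vsub y x).
Proof.
  rewrite <- vnorm_opp. f_equal. unfold vsub. rewrite vopp_add, vopp_opp. apply vadd_comm.
Qed.

Lemma vsub_add_r {X : NormedSpace} (u v : X) (a : R) : vsub u (vadd u (vscal a v)) = vopp (vscal a v).
Proof.
  rewrite <- (vadd_0r u) at 1. rewrite vsub_add2. unfold vsub. apply vadd_0l.
Qed.

Lemma lin0 {X : NormedSpace} (f : X -> R) : in_dual X f -> f vzero = 0.
Proof. intros [_ [H _]]. rewrite <- (vscal_0 vzero), H. ring. Qed.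

Lemma linopp {X : NormedSpace} (f : X -> R) x : in_dual X f -> f (vopp x) = - f x.
Proof. intros Hf. pose proof Hf as [_ [H _]]. rewrite vopp_scal, H. ring. Qed.

Lemma linsub {X : NormedSpace} (f : X -> R) x y : in_dual X f -> f (vsub x y) = f x - f y.
Proof. intros Hf. pose proof Hf as [Ha _]. unfold vsub. rewrite Ha, linopp by exact Hf. ring. Qed.

Lemma dual_bound {X : NormedSpace} (f : X -> R) : in_dual X f -> dual_norm_is f 1 ->
  forall x, Rabs (f x) <= vnorm x.
Proof.
  intros Hf [Hub _] x.
  destruct (Req_dec (vnorm x) 0) as [H0|H0].
  - apply vnorm_eq0 in H0. subst x. rewrite lin0 by exact Hf. rewrite Rabs_R0, vnorm0. lra.
  - pose proof (vnorm_nonneg x) as Hnn.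
    assert (Hp : 0 < vnorm x) by lra.
    assert (Hn : vnorm (vscal (/ vnorm x) x) <= 1).
    { rewrite vnorm_scal, Rabs_inv, Rabs_pos_eq by lra. rewrite Rinv_l by lra. lra. }
    pose proof (Hub _ (ex_intro _ _ (conj Hn eq_refl))) as H.
    simpl in H. destruct Hf as [_ [Hs _]]. rewrite Hs, Rabs_mult, Rabs_inv, (Rabs_pos_eq (vnorm x)) in H by lra.
    apply Rmult_le_reg_l with (/ vnorm x). apply Rinv_0_lt_compat; lra.
    rewrite Rinv_l by lra. lra.
Qed.

Lemma vadd_ACA {X : NormedSpace} (a b c d : X) :
  vadd (vadd a b) (vadd c d) = vadd (vadd a c) (vadd b d).
Proof.
  rewrite <- !vadd_assoc. f_equal. rewrite !vadd_assoc. f_equal. apply vadd_comm.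
Qed.

Lemma I1 {X : NormedSpace} (x z : X) : vadd (vadd x z) (vopp x) = z.
Proof. rewrite (vadd_comm _ x z), <- vadd_assoc, vadd_oppr. apply vadd_0r. Qed.

Lemma I2 {X : NormedSpace} a t (x y : X) :
  vscal a (vadd x (vscal t y)) = vadd (vscal a x) (vscal (a*t) y).
Proof. rewrite vscal_distr_v, vscal_assoc. reflexivity. Qed.

Lemma I3 {X : NormedSpace} t1 t2 (x x' y : X) :
  vadd (vadd x x') (vscal (t1+t2) y) = vadd (vadd x (vscal t1 y)) (vadd x' (vscal t2 y)).
Proof. rewrite vscal_distr_s. apply vadd_ACA. Qed.

Lemma I4 {X : NormedSpace} (x z : X) : vadd (vopp (vsub x z)) x = z.
Proof. unfold vsub. rewrite vopp_add, vopp_opp, vadd_comm, vadd_assoc, vadd_oppr. apply vadd_0l. Qed.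

Lemma I5 {X : NormedSpace} a t (x x0 : X) :
  vsub (vscal a x) (vscal (a*t) x0) = vscal a (vsub x (vscal t x0)).
Proof. unfold vsub. rewrite vscal_distr_v, vscal_opp, vscal_assoc. reflexivity. Qed.

Lemma I6 {X : NormedSpace} t s (x y x0 : X) :
  vsub (vadd x y) (vscal (t+s) x0) = vadd (vsub x (vscal t x0)) (vsub y (vscal s x0)).
Proof. unfold vsub. rewrite vscal_distr_s, vopp_add. apply vadd_ACA. Qed.

Lemma I7 {X : NormedSpace} (x0 : X) : vsub (vopp x0) (vscal (-1) x0) = vzero.
Proof. rewrite <- vopp_scal. apply vsub_diag. Qed.

Lemma vnorm_sub_ge {X : NormedSpace} (x z : X) : vnorm z - vnorm x <= vnorm (vsub x z).
Proof.
  pose proof (vnorm_triangle _ (vopp (vsub x z)) x) as H. rewrite I4, vnorm_opp in H. lra.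
Qed.

Lemma glb_exists (E : R -> Prop) (m : R) :
  (exists r, E r) -> (forall r, E r -> m <= r) -> exists g, is_glb E g.
Proof.
  intros [r0 Hr0] Hm.
  destruct (completeness (fun r => E (- r))) as [L [HL1 HL2]].
  - exists (- m). intros r Hr. apply Hm in Hr. lra.
  - exists (- r0). rewrite Ropp_involutive. exact Hr0.
  - exists (- L). split.
    + intros r Hr. assert (H : - r <= L). { apply HL1. rewrite Ropp_involutive. exact Hr. } lra.
    + intros b Hb. assert (H : L <= - b). { apply HL2. intros r Hr. apply Hb in Hr. lra. } lra.
Qed.

Lemma glb_le (E : R -> Prop) g r : is_glb E g -> E r -> g <= r.
Proof. intros [H _]. auto. Qed.

Lemma glb_ge (E : R -> Prop) g v : is_glb E g -> (forall r, E r -> v <= r) -> v <= g.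
Proof. intros [_ H]. auto. Qed.

Lemma glb_add (E1 E2 : R -> Prop) g1 g2 v : is_glb E1 g1 -> is_glb E2 g2 ->
  (forall r1 r2, E1 r1 -> E2 r2 -> v <= r1 + r2) -> v <= g1 + g2.
Proof.
  intros H1 H2 H.
  assert (v - g1 <= g2).
  { apply (glb_ge _ _ _ H2). intros r2 Hr2.
    assert (v - r2 <= g1). { apply (glb_ge _ _ _ H1). intros r1 Hr1. specialize (H r1 r2 Hr1 Hr2). lra. }
    lra. }
  lra.
Qed.

Lemma glb_scale (E : R -> Prop) g v a : 0 < a -> is_glb E g ->
  (forall r, E r -> v <= a * r) -> v <= a * g.
Proof.
  intros Ha Hg H.
  assert (v / a <= g).
  { apply (glb_ge _ _ _ Hg). intros r Hr. specialize (H r Hr).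
    apply Rmult_le_reg_l with a; [lra|]. field_simplify; lra. }
  apply Rmult_le_reg_l with (/ a). apply Rinv_0_lt_compat; lra.
  rewrite <- Rmult_assoc, Rinv_l by lra. unfold Rdiv in H0. lra.
Qed.

Lemma fchoice {A : Type} (P : A -> R -> Prop) : (forall x, exists g, P x g) -> exists h : A -> R, forall x, P x (h x).
Proof.
  intro H. exists (fun x => proj1_sig (constructive_indefinite_description _ (H x))).
  intro x. exact (proj2_sig (constructive_indefinite_description _ (H x))).
Qed.

Definition sublin {X : NormedSpace} (p : X -> R) :=
  (forall x y, p (vadd x y) <= p x + p y) /\ (forall a x, 0 < a -> p (vscal a x) = a * p x).

Lemma sublin_mk {X : NormedSpace} (p : X -> R) :
  (forall x y, p (vadd x y) <= p x + p y) -> (forall a x, 0 < a -> p (vscal a x) <= a * p x) -> sublin p.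
Proof.
  intros Hs Hh. split; [exact Hs|]. intros a x Ha. apply Rle_antisym; [auto|].
  pose proof (Hh (/ a) (vscal a x)) as H. rewrite vscal_assoc, Rinv_l, vscal_1 in H by lra.
  assert (H' := H (Rinv_0_lt_compat _ Ha)).
  apply Rmult_le_compat_l with (r := a) in H'; [|lra].
  rewrite <- Rmult_assoc, Rinv_r, Rmult_1_l in H' by lra. exact H'.
Qed.

Lemma sublin_0 {X : NormedSpace} (p : X -> R) : sublin p -> p vzero = 0.
Proof.
  intros [_ Hh]. pose proof (Hh 2 vzero) as H. rewrite vscal_zero in H. specialize (H ltac:(lra)). lra.
Qed.

Lemma sublin_scal0 {X : NormedSpace} (p : X -> R) t x : sublin p -> 0 <= t -> p (vscal t x) = t * p x.
Proof.
  intros Hp Ht. destruct (Req_dec t 0) as [->|Hn].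
  - rewrite vscal_0, sublin_0 by exact Hp. ring.
  - apply (proj2 Hp). lra.
Qed.

Lemma sublin_lower {X : NormedSpace} (p : X -> R) x : sublin p -> - p (vopp x) <= p x.
Proof.
  intros Hp. pose proof (proj1 Hp x (vopp x)) as H. rewrite vadd_oppr, sublin_0 in H by exact Hp. lra.
Qed.

Lemma minimal_additive {X : NormedSpace} (q p : X -> R) :
  sublin p -> (forall x, p x <= q x) ->
  (forall s, sublin s -> (forall x, s x <= q x) -> (forall x, s x <= p x) -> forall x, p x <= s x) ->
  forall x y, p (vadd x y) = p x + p y.
Proof.
  intros Hp Hpq Hmin x0 y.
  set (E := fun x r => exists t, 0 <= t /\ r = p (vadd x (vscal t y)) - t * p y).
  destruct (fchoice (fun x g => is_glb (E x) g)) as [py Hpy].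
  { intro x. apply glb_exists with (- p (vopp x)).
    - exists (p (vadd x (vscal 0 y)) - 0 * p y). exists 0. split; [lra|reflexivity].
    - intros r [t [Ht ->]].
      pose proof (proj1 Hp (vadd x (vscal t y)) (vopp x)) as H.
      rewrite I1, sublin_scal0 in H by assumption. lra. }
  assert (Hle : forall x, py x <= p x).
  { intro x. apply (glb_le _ _ _ (Hpy x)). exists 0. split; [lra|].
    rewrite vscal_0, vadd_0r. ring. }
  assert (Hsub : sublin py).
  { apply sublin_mk.
    - intros x x'. apply (glb_add _ _ _ _ _ (Hpy x) (Hpy x')).
      intros r1 r2 [t1 [Ht1 ->]] [t2 [Ht2 ->]].
      apply Rle_trans with (p (vadd (vadd x x') (vscal (t1+t2) y)) - (t1+t2) * p y).
      + apply (glb_le _ _ _ (Hpy _)). exists (t1+t2). split; [lra|reflexivity].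
      + rewrite I3. pose proof (proj1 Hp (vadd x (vscal t1 y)) (vadd x' (vscal t2 y))). lra.
    - intros a x Ha. apply (glb_scale _ _ _ _ Ha (Hpy x)).
      intros r [t [Ht ->]].
      apply Rle_trans with (p (vadd (vscal a x) (vscal (a*t) y)) - (a*t) * p y).
      + apply (glb_le _ _ _ (Hpy _)). exists (a*t). split; [nra|reflexivity].
      + rewrite <- I2, (proj2 Hp a _ Ha). lra. }
  assert (Hge : forall x, p x <= py x).
  { apply Hmin; [exact Hsub| |exact Hle]. intro x. apply Rle_trans with (p x); auto. }
  apply Rle_antisym; [apply (proj1 Hp)|].
  pose proof (Hge x0) as H.
  assert (H1 : py x0 <= p (vadd x0 (vscal 1 y)) - 1 * p y).
  { apply (glb_le _ _ _ (Hpy x0)). exists 1. split; [lra|reflexivity]. }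
  rewrite vscal_1 in H1. lra.
Qed.
Lemma zorn_pre (T : Type) (t0 : T) (R : T -> T -> Prop) :
  (forall t, R t t) -> (forall r s t, R r s -> R s t -> R r t) ->
  (forall A : T -> Prop, (forall s t, A s -> A t -> R s t \/ R t s) ->
      exists t, forall s, A s -> R s t) ->
  exists t, forall s, R t s -> R s t.
Proof.
intros Hr Ht Hc.
destruct (@classical_sets.ZL_preorder T t0 (fun a b => boolp.asbool (R a b))) as [t Ht0].
- intro t. rewrite boolp.asboolE. apply Hr.
- intros r s u H1 H2. rewrite boolp.asboolE in *.
  apply (Ht r s u); assumption.
- intros A HA. destruct (Hc A) as [t HtA].
  + intros s u Hs Hu. destruct (HA s u Hs Hu) as [H|H]; [left|right]; rewrite boolp.asboolE in H; exact H.
  + exists t. intros s Hs. rewrite boolp.asboolE. auto.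
- exists t. intros s Hs. apply boolp.asboolW. apply Ht0. apply boolp.asboolT. exact Hs.
Qed.

Lemma HB {X : NormedSpace} (x0 : X) : x0 <> vzero ->
  exists f, in_dual X f /\ dual_norm_is f 1 /\ (forall x, Rabs (f x) <= vnorm x) /\ f x0 = vnorm x0.
Proof.
  intro Hx0.
  assert (Hn0 : 0 < vnorm x0).
  { pose proof (vnorm_nonneg x0) as Hnn. destruct (Req_dec (vnorm x0) 0) as [H|H]; [|lra].
    apply vnorm_eq0 in H. contradiction. }
  set (E := fun x r => exists t, r = vnorm (vsub x (vscal t x0)) + t * vnorm x0).
  destruct (fchoice (fun x g => is_glb (E x) g)) as [q Hq].
  { intro x. apply glb_exists with (- vnorm x).
    - exists (vnorm (vsub x (vscal 0 x0)) + 0 * vnorm x0). exists 0. reflexivity.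
    - intros r [t ->]. pose proof (vnorm_sub_ge x (vscal t x0)) as H.
      rewrite vnorm_scal in H. pose proof (Rle_abs (-t)) as Ha1. rewrite Rabs_Ropp in Ha1. pose proof (Rle_abs t) as Ha2. nra. }
  assert (Hqn : forall x, q x <= vnorm x).
  { intro x. apply (glb_le _ _ _ (Hq x)). exists 0. rewrite vscal_0, vsub_0r. ring. }
  assert (Hqx0 : q (vopp x0) <= - vnorm x0).
  { apply (glb_le _ _ _ (Hq _)). exists (-1). rewrite I7, vnorm0. ring. }
  assert (Hqs : sublin q).
  { apply sublin_mk.
    - intros x y. apply (glb_add _ _ _ _ _ (Hq x) (Hq y)).
      intros r1 r2 [t1 ->] [t2 ->].
      apply Rle_trans with (vnorm (vsub (vadd x y) (vscal (t1+t2) x0)) + (t1+t2) * vnorm x0).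
      + apply (glb_le _ _ _ (Hq _)). exists (t1+t2). reflexivity.
      + rewrite I6. pose proof (vnorm_triangle _ (vsub x (vscal t1 x0)) (vsub y (vscal t2 x0))). lra.
    - intros a x Ha. apply (glb_scale _ _ _ _ Ha (Hq x)).
      intros r [t ->].
      apply Rle_trans with (vnorm (vsub (vscal a x) (vscal (a*t) x0)) + (a*t) * vnorm x0).
      + apply (glb_le _ _ _ (Hq _)). exists (a*t). reflexivity.
      + rewrite I5, vnorm_scal, Rabs_pos_eq by lra. lra. }
  set (T := {p : X -> R | sublin p /\ forall x, p x <= q x}).
  set (Rl := fun (a b : T) => forall x, proj1_sig b x <= proj1_sig a x).
  destruct (@zorn_pre T (exist _ q (conj Hqs (fun x => Rle_refl _))) Rl) as [pm Hpm].
  - intros t x. lra.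
  - intros r s t H1 H2 x. specialize (H1 x). specialize (H2 x). lra.
  - intros A HA. destruct (classic (exists s, A s)) as [[s0 Hs0]|Hne].
    + set (Ep := fun x r => exists s : T, A s /\ r = proj1_sig s x).
      destruct (fchoice (fun x g => is_glb (Ep x) g)) as [pinf Hpinf].
      { intro x. apply glb_exists with (- q (vopp x)).
        - exists (proj1_sig s0 x). exists s0. split; [exact Hs0|reflexivity].
        - intros r [s [Hs ->]]. destruct s as [s [Hss Hsq]]. simpl.
          pose proof (sublin_lower s x Hss). pose proof (Hsq (vopp x)). lra. }
      assert (Hps : sublin pinf).
      { apply sublin_mk.
        - intros x y. apply (glb_add _ _ _ _ _ (Hpinf x) (Hpinf y)).
          intros r1 r2 [s1 [Hs1 ->]] [s2 [Hs2 ->]].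
          destruct (HA s1 s2 Hs1 Hs2) as [H|H].
          + apply Rle_trans with (proj1_sig s2 (vadd x y)).
            * apply (glb_le _ _ _ (Hpinf _)). exists s2. split; [exact Hs2|reflexivity].
            * pose proof (proj1 (proj1 (proj2_sig s2)) x y). specialize (H x). lra.
          + apply Rle_trans with (proj1_sig s1 (vadd x y)).
            * apply (glb_le _ _ _ (Hpinf _)). exists s1. split; [exact Hs1|reflexivity].
            * pose proof (proj1 (proj1 (proj2_sig s1)) x y). specialize (H y). lra.
        - intros a x Ha. apply (glb_scale _ _ _ _ Ha (Hpinf x)).
          intros r [s [Hs ->]].
          rewrite <- (proj2 (proj1 (proj2_sig s)) a x Ha).
          apply (glb_le _ _ _ (Hpinf _)). exists s. split; [exact Hs|reflexivity]. }
      assert (Hpq : forall x, pinf x <= q x).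
      { intro x. apply Rle_trans with (proj1_sig s0 x).
        - apply (glb_le _ _ _ (Hpinf _)). exists s0. split; [exact Hs0|reflexivity].
        - apply (proj2 (proj2_sig s0)). }
      exists (exist _ pinf (conj Hps Hpq)). intros s Hs x. simpl.
      apply (glb_le _ _ _ (Hpinf _)). exists s. split; [exact Hs|reflexivity].
    + exists (exist _ q (conj Hqs (fun x => Rle_refl _))). intros s Hs. exfalso. apply Hne. eauto.
  - destruct pm as [p [Hp Hpq]]. simpl in *.
    assert (Hadd : forall x y, p (vadd x y) = p x + p y).
    { apply (minimal_additive q p Hp Hpq).
      intros s Hs Hsq Hsp.
      specialize (Hpm (exist _ s (conj Hs Hsq))). unfold Rl in Hpm. simpl in Hpm. auto. }
    assert (Hopp : forall x, p (vopp x) = - p x).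
    { intro x. pose proof (Hadd x (vopp x)) as H. rewrite vadd_oppr, sublin_0 in H by exact Hp. lra. }
    assert (Hsc : forall a x, p (vscal a x) = a * p x).
    { intros a x. destruct (Rle_lt_dec 0 a) as [Ha|Ha].
      - apply sublin_scal0; assumption.
      - replace (vscal a x) with (vopp (vscal (-a) x)).
        + rewrite Hopp, sublin_scal0 by (auto; lra). ring.
        + rewrite vopp_scal, vscal_assoc. f_equal. ring. }
    assert (Hb : forall x, Rabs (p x) <= vnorm x).
    { intro x. apply Rabs_le. split.
      - pose proof (Hpq (vopp x)). pose proof (Hqn (vopp x)). rewrite Hopp, vnorm_opp in *. lra.
      - pose proof (Hpq x). pose proof (Hqn x). lra. }
    assert (Hdual : in_dual X p).
    { split; [exact Hadd|split; [exact Hsc|]]. exists 1. intro x. rewrite Rmult_1_l. apply Hb. }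
    assert (Hpx0 : p x0 = vnorm x0).
    { apply Rle_antisym.
      - pose proof (Hb x0). pose proof (Rle_abs (p x0)). lra.
      - pose proof (Hpq (vopp x0)). rewrite Hopp in H. lra. }
    exists p. split; [exact Hdual|]. split; [|split; [exact Hb|exact Hpx0]].
    split.
    + intros r [x [Hx ->]]. pose proof (Hb x). lra.
    + intros b Hub. apply Hub. exists (vscal (/ vnorm x0) x0). split.
      * rewrite vnorm_scal, Rabs_pos_eq by (left; apply Rinv_0_lt_compat; lra).
        rewrite Rinv_l by lra. lra.
      * rewrite Hsc, Hpx0, Rinv_l by lra. rewrite Rabs_R1. reflexivity.
Qed.

Lemma norm_pos {X : NormedSpace} (x y : X) : x <> y -> 0 < vnorm (vsub x y).
Proof.
  intro H. pose proof (vnorm_nonneg (vsub x y)) as Hnn.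
  destruct (Req_dec (vnorm (vsub x y)) 0) as [H0|H0]; [|lra].
  apply vnorm_eq0, vsub_eq0 in H0. contradiction.
Qed.

Lemma norm_pos0 {X : NormedSpace} (x : X) : x <> vzero -> 0 < vnorm x.
Proof. intro H. pose proof (norm_pos x vzero H). rewrite vsub_0r in H0. exact H0. Qed.

Lemma lip_bound {X : NormedSpace} (T : X -> X) : lip_norm_is T 1 ->
  forall x y, vnorm (vsub (T x) (T y)) <= vnorm (vsub x y).
Proof.
  intros [Hub _] x y. destruct (classic (x = y)) as [->|Hne].
  - rewrite !vsub_diag. lra.
  - pose proof (norm_pos x y Hne) as Hp.
    assert (H : vnorm (vsub (T x) (T y)) / vnorm (vsub x y) <= 1).
    { apply Hub. exists x, y. split; [exact Hne|reflexivity]. }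
    apply Rmult_le_reg_r with (/ vnorm (vsub x y)). apply Rinv_0_lt_compat; lra.
    rewrite Rinv_r by lra. exact H.
Qed.

Lemma in_D_scale {X : NormedSpace} (f : X -> R) (d : X) :
  in_dual X f -> dual_norm_is f 1 -> f d = vnorm d ->
  in_D d (fun x => vnorm d * f x).
Proof.
  intros Hf Hn Hfd. pose proof (vnorm_nonneg d) as Hdn.
  pose proof Hf as [Ha [Hs [M HM]]].
  split.
  - split; [|split].
    + intros x y. rewrite Ha. ring.
    + intros a x. rewrite Hs. ring.
    + exists (vnorm d * M). intro x. rewrite Rabs_mult, Rabs_pos_eq by lra.
      rewrite Rmult_assoc. apply Rmult_le_compat_l; auto.
  - exists (vnorm d). split; [|split].
    + split.
      * intros r [x [Hx ->]]. rewrite Rabs_mult, Rabs_pos_eq by lra.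
        pose proof (dual_bound f Hf Hn x). pose proof (Rabs_pos (f x)). nra.
      * intros b Hb. destruct (Req_dec (vnorm d) 0) as [H0|H0].
        -- rewrite H0. apply Hb. exists vzero. split. rewrite vnorm0; lra.
           rewrite H0, Rmult_0_l, Rabs_R0. reflexivity.
        -- assert (Hd : 0 < vnorm d) by lra.
           assert (1 <= b / vnorm d).
           { destruct Hn as [_ Hl]. apply Hl. intros r [x [Hx ->]].
             assert (Rabs (vnorm d * f x) <= b) by (apply Hb; eauto).
             rewrite Rabs_mult, Rabs_pos_eq in H by lra.
             apply Rmult_le_reg_l with (vnorm d); [lra|]. field_simplify; lra. }
           apply Rmult_le_reg_r with (/ vnorm d). apply Rinv_0_lt_compat; lra.
           rewrite Rinv_r by lra. unfold Rdiv in H. lra.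
    + rewrite Hfd. reflexivity.
    + ring.
Qed.

Lemma exists_in_D {X : NormedSpace} (d : X) : d <> vzero -> exists F, in_D d F.
Proof.
  intro H. destruct (HB d H) as [f [Hf [Hn [_ Hfd]]]]. exists (fun x => vnorm d * f x).
  apply in_D_scale; assumption.
Qed.

Lemma path_bound {X : NormedSpace} (T : X -> X) (g : X -> R) (Hg : in_dual X g) (c k : R) :
  forall l : list (R * X),
  (forall p a, In p l -> Rabs (g (vsub (T (vadd a (vscal (c * fst p) (snd p)))) (T a))) <= k * Rabs (fst p)) ->
  forall q, Rabs (g (vsub (T (vadd q (vscal c (lincomb l)))) (T q))) <= k * sum_abs_coef l.
Proof.
  induction l as [|[lam s] l IH]; intros Hl q; simpl.
  - rewrite vscal_zero, vadd_0r, vsub_diag, lin0, Rabs_R0 by exact Hg. lra.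
  - rewrite vscal_distr_v, vscal_assoc, vadd_assoc.
    set (q' := vadd q (vscal (c * lam) s)).
    assert (E : g (vsub (T (vadd q' (vscal c (lincomb l)))) (T q)) =
                g (vsub (T (vadd q' (vscal c (lincomb l)))) (T q')) + g (vsub (T q') (T q))).
    { rewrite !linsub by exact Hg. ring. }
    rewrite E.
    pose proof (IH (fun p a H => Hl p a (or_intror H)) q') as H1.
    pose proof (Hl (lam, s) q (or_introl eq_refl)) as H2. simpl in H2.
    pose proof (Rabs_triang (g (vsub (T (vadd q' (vscal c (lincomb l)))) (T q'))) (g (vsub (T q') (T q)))).
    unfold q' in *. lra.
Qed.

Lemma lip_near {X : NormedSpace} (T : X -> X) (d : R) : lip_norm_is T 1 -> 0 < d ->
  exists x y, x <> y /\ (1 - d) * vnorm (vsub x y) < vnorm (vsub (T x) (T y)).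
Proof.
  intros [_ Hl] Hd. apply NNPP. intro Hno.
  assert (1 <= 1 - d); [|lra].
  apply Hl. intros r [x [y [Hxy ->]]].
  pose proof (norm_pos x y Hxy).
  assert (H1 : vnorm (vsub (T x) (T y)) <= (1 - d) * vnorm (vsub x y)).
  { apply Rnot_lt_le. intro H'. apply Hno. eauto. }
  apply Rmult_le_reg_r with (vnorm (vsub x y)); [lra|].
  unfold Rdiv. rewrite Rmult_assoc, Rinv_l by lra. lra.
Qed.

Lemma sign_exists (a : R) : exists r, (r = 1 \/ r = -1) /\ r * a = Rabs a.
Proof.
  destruct (Rle_dec 0 a) as [H|H].
  - exists 1. split; [auto|]. rewrite Rabs_pos_eq by lra. ring.
  - exists (-1). split; [auto|]. rewrite Rabs_left by lra. ring.
Qed.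

Lemma omega_ge {X : NormedSpace} (Hlush : lush X) (Hnt : exists x : X, x <> vzero)
  (T : X -> X) (HL : lip_norm_is T 1) (w : R) (Hw : omega_is T w) : 1 <= w.
Proof.
  assert (Hw0 : 0 <= w).
  { destruct Hnt as [x0 Hx0].
    assert (Hd : vsub x0 vzero <> vzero) by (rewrite vsub_0r; exact Hx0).
    destruct (exists_in_D _ Hd) as [F HF].
    destruct Hw as [Hub _].
    eapply Rle_trans; [|apply Hub; exists x0, vzero, F; split; [exact Hx0|split; [exact HF|reflexivity]]].
    apply Rmult_le_pos; [apply Rabs_pos|]. left. apply Rinv_0_lt_compat.
    pose proof (norm_pos0 _ Hd). apply pow_lt. lra. }
  apply Rnot_lt_le. intro Hlt.
  set (e := 1 - w).
  assert (He : 0 < e <= 1) by (unfold e; lra).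
  set (t := e / 4). set (eta := e / 4). set (eps := e * e / 64).
  assert (Heps : 0 < eps) by (unfold eps; nra).
  destruct (lip_near T eps HL Heps) as [x [y [Hxy HTxy]]].
  set (c := vnorm (vsub x y)).
  assert (Hc : 0 < c) by (apply norm_pos; exact Hxy).
  set (N := vnorm (vsub (T x) (T y))).
  change (vnorm (vsub x y)) with c in HTxy. change (vnorm (vsub (T x) (T y))) with N in HTxy.
  assert (Heps1 : eps < 1) by (unfold eps; nra).
  assert (HN : 0 < N) by (unfold N, c in *; nra).
  set (v := vscal (/ c) (vsub x y)).
  set (z := vscal (/ N) (vsub (T x) (T y))).
  assert (Hv : vnorm v = 1).
  { unfold v. rewrite vnorm_scal, Rabs_pos_eq by (left; apply Rinv_0_lt_compat; lra).
    fold c. field. lra. }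
  assert (Hz : vnorm z = 1).
  { unfold z. rewrite vnorm_scal, Rabs_pos_eq by (left; apply Rinv_0_lt_compat; lra).
    fold N. field. lra. }
  destruct (Hlush v z Hv Hz eps Heps) as [ys [[Hysd Hys1] [[_ Hyz] [a0 [[l [Hl [Hsum Ha0]]] Hdist]]]]].
  pose proof (dual_bound ys Hysd Hys1) as Hysb.
  destruct (classic (exists p a, In p l /\ (1 - eta) * c * Rabs (fst p) <
       Rabs (ys (vsub (T (vadd a (vscal (c * fst p) (snd p)))) (T a))))) as [[[lam s] [a [Hin Hbig]]] | Hno].
  2: {
    assert (Hpath := path_bound T ys Hysd c ((1 - eta) * c) l).
    assert (Hhyp : forall p a, In p l -> Rabs (ys (vsub (T (vadd a (vscal (c * fst p) (snd p)))) (T a))) <= (1 - eta) * c * Rabs (fst p)).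
    { intros p a Hp. apply Rnot_lt_le. intro H. apply Hno. eauto. }
    specialize (Hpath Hhyp y).
    rewrite <- Ha0 in Hpath.
    assert (Hsum0 : 0 <= sum_abs_coef l).
    { clear. induction l as [|[a s] l IH]; simpl; [lra|]. pose proof (Rabs_pos a). lra. }
    assert (Heta : 0 < 1 - eta) by (unfold eta; lra).
    assert (Hp1 : Rabs (ys (vsub (T (vadd y (vscal c a0))) (T y))) <= (1 - eta) * c).
    { eapply Rle_trans; [exact Hpath|]. assert (0 < (1-eta)*c) by nra. nra. }
    assert (Hx : x = vadd y (vscal c v)).
    { unfold v. rewrite vscal_assoc, Rinv_r, vscal_1 by lra. unfold vsub.
      rewrite vadd_comm, <- vadd_assoc, vadd_oppl. symmetry. apply vadd_0r. }
    assert (Hxs : vnorm (vsub x (vadd y (vscal c a0))) < c * eps).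
    { rewrite Hx, vsub_add2. unfold vsub. rewrite <- vscal_opp, <- vscal_distr_v.
      rewrite vnorm_scal, Rabs_pos_eq by lra. fold (vsub v a0).
      apply Rmult_lt_compat_l; assumption. }
    set (p := vadd y (vscal c a0)) in *.
    assert (HNz : vsub (T x) (T y) = vscal N z).
    { unfold z. rewrite vscal_assoc, Rinv_r, vscal_1 by lra. reflexivity. }
    assert (E1 : ys (vsub (T p) (T y)) = ys (vsub (T x) (T y)) - ys (vsub (T x) (T p))).
    { rewrite !linsub by exact Hysd. ring. }
    assert (E2 : ys (vsub (T x) (T y)) = N * ys z).
    { rewrite HNz. apply (proj1 (proj2 Hysd)). }
    pose proof (Hysb (vsub (T x) (T p))) as B1.
    pose proof (lip_bound T HL x p) as B2.
    pose proof (Rle_abs (ys (vsub (T p) (T y)))) as B3.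
    pose proof (Rle_abs (ys (vsub (T x) (T p)))) as B4.
    assert (B5 : N * (1 - eps) < N * ys z) by (apply Rmult_lt_compat_l; lra).
    assert (B6 : (1 - eps) * c * (1 - eps) <= N * (1 - eps)). { apply Rmult_le_compat_r. lra. lra. }
    assert (B7a : N * (1 - eps) - c * eps < ys (vsub (T p) (T y))) by lra.
    assert (B7 : (1 - eps) * c * (1 - eps) - c * eps < (1 - eta) * c) by lra.
    assert (B8 : c * ((1 - eps) * (1 - eps) - eps - (1 - eta)) < 0) by nra.
    assert (B9 : (1 - eps) * (1 - eps) - eps - (1 - eta) < 0).
    { destruct (Rlt_le_dec ((1 - eps) * (1 - eps) - eps - (1 - eta)) 0) as [h|h]; [exact h|].
      exfalso. assert (0 <= c * ((1 - eps) * (1 - eps) - eps - (1 - eta))) by (apply Rmult_le_pos; lra). lra. }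
    unfold eps, eta in B9. nra. }
  simpl in Hbig.
  destruct (Hl (lam, s) Hin) as [Hs1 Hys]. simpl in Hs1, Hys.
  set (K := c * Rabs lam).
  set (u := vscal (c * lam) s) in *.
  set (a' := vadd a u) in *.
  set (DT := vsub (T a') (T a)) in *.
  assert (HK0 : 0 <= K) by (unfold K; pose proof (Rabs_pos lam); nra).
  assert (Hu : vnorm u <= K).
  { unfold u, K. rewrite vnorm_scal, Rabs_mult. rewrite (Rabs_pos_eq c) by lra.
    pose proof (Rabs_pos lam). apply Rle_trans with (c * Rabs lam * 1); [apply Rmult_le_compat_l; nra | lra]. }
  assert (HDT : vnorm DT <= vnorm u).
  { unfold DT. pose proof (lip_bound T HL a' a). unfold a' in *. rewrite vsub_addl in H. exact H. }
  pose proof (Hysb DT) as HysDT.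
  assert (HK : 0 < K).
  { assert ((1 - eta) * K < K) by (unfold K in *; lra).
    unfold eta in H. nra. }
  destruct (sign_exists lam) as [rho [Hrho Hrl]].
  destruct (sign_exists (rho * ys DT)) as [tau0 [Htau0 Htl]].
  set (tau := t * tau0).
  set (d := vadd u (vscal tau DT)).
  assert (Hysd_val : rho * ys d = K * ys s + t * Rabs (ys DT)).
  { unfold d, u, tau, K. destruct Hysd as [Ha [Hsc _]].
    assert (Habs : Rabs (rho * ys DT) = Rabs (ys DT)).
    { rewrite Rabs_mult. destruct Hrho as [-> | ->]; [rewrite Rabs_R1|rewrite (Rabs_left (-1)) by lra]; ring. }
    rewrite Ha, !Hsc. rewrite <- Habs, <- Htl, <- Hrl.
    destruct Hrho as [-> | ->]; destruct Htau0 as [-> | ->]; ring. }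
  assert (Hnd : K * (1 - eps) + t * ((1 - eta) * K) < vnorm d).
  { pose proof (Hysb d) as Hb. pose proof (Rle_abs (ys d)). pose proof (Rle_abs (- ys d)) as Hm.
    rewrite Rabs_Ropp in Hm.
    assert (K * (1 - eps) < K * ys s) by (apply Rmult_lt_compat_l; lra).
    assert (Ht0 : 0 < t) by (unfold t; lra).
    assert (t * ((1 - eta) * K) < t * Rabs (ys DT)).
    { apply Rmult_lt_compat_l; [lra|]. unfold K. lra. }
    destruct Hrho as [-> | ->]; lra. }
  assert (Ht0 : 0 < t) by (unfold t; lra).
  assert (Hdpos : 0 < vnorm d).
  { assert (0 < K * (1 - eps)) by (apply Rmult_lt_0_compat; lra).
    assert (0 < t * ((1 - eta) * K)) by (apply Rmult_lt_0_compat; [lra|]; apply Rmult_lt_0_compat; unfold eta; lra).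
    lra. }
  assert (Hd0 : d <> vzero).
  { intro H. rewrite H, vnorm0 in Hdpos. lra. }
  destruct (HB d Hd0) as [f [Hfd [Hf1 [Hfb Hfdd]]]].
  set (a'' := vadd a d).
  set (DT2 := vsub (T a'') (T a)).
  assert (Hsa : vsub a'' a = d) by (unfold a''; apply vsub_addl).
  assert (Hne : a'' <> a).
  { intro H. rewrite H, vsub_diag in Hsa. apply Hd0. symmetry. exact Hsa. }
  assert (Hom : Rabs (vnorm d * f DT2) / vnorm (vsub a'' a) ^ 2 <= w).
  { apply (proj1 Hw). exists a'', a, (fun x => vnorm d * f x). split; [exact Hne|split; [|reflexivity]].
    rewrite Hsa. apply in_D_scale; assumption. }
  rewrite Hsa, Rabs_mult, (Rabs_pos_eq (vnorm d)) in Hom by lra.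
  assert (Hf2 : Rabs (f DT2) <= w * vnorm d).
  { replace (vnorm d * Rabs (f DT2) / vnorm d ^ 2) with (Rabs (f DT2) / vnorm d) in Hom by (field; lra).
    apply Rmult_le_reg_r with (/ vnorm d). apply Rinv_0_lt_compat; lra.
    rewrite Rmult_assoc, Rinv_r by lra. unfold Rdiv in Hom. lra. }
  assert (Hdec : vnorm d = f u + tau * f DT).
  { rewrite <- Hfdd. unfold d. destruct Hfd as [Ha [Hsc _]]. rewrite Ha, Hsc. reflexivity. }
  assert (Hfu : f u <= K).
  { pose proof (Hfb u). pose proof (Rle_abs (f u)). lra. }
  assert (Htau : tau * f DT <= t * Rabs (f DT)).
  { unfold tau. pose proof (Rle_abs (f DT)). pose proof (Rle_abs (- f DT)) as Hm. rewrite Rabs_Ropp in Hm.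
    destruct Htau0 as [-> | ->]; nra. }
  assert (Hdiff : f DT - f DT2 = f (vsub (T a') (T a''))).
  { unfold DT, DT2. rewrite !linsub by exact Hfd. ring. }
  assert (Habstau : Rabs tau = t).
  { unfold tau. rewrite Rabs_mult, Rabs_pos_eq by lra.
    destruct Htau0 as [-> | ->]; [rewrite Rabs_R1|rewrite (Rabs_left (-1)) by lra]; ring. }
  assert (Ha'a'' : vnorm (vsub a' a'') = t * vnorm DT).
  { unfold a', a''. rewrite vsub_add2. unfold d. rewrite vsub_add_r, vnorm_opp, vnorm_scal, Habstau. reflexivity. }
  assert (HTa : Rabs (f (vsub (T a') (T a''))) <= t * K).
  { pose proof (Hfb (vsub (T a') (T a''))). pose proof (lip_bound T HL a' a'').
    assert (t * vnorm DT <= t * K) by (apply Rmult_le_compat_l; lra). lra. }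
  assert (HfDT : Rabs (f DT) <= w * vnorm d + t * K).
  { replace (f DT) with (f DT2 + f (vsub (T a') (T a''))) by lra.
    pose proof (Rabs_triang (f DT2) (f (vsub (T a') (T a'')))). lra. }
  assert (Hdup : vnorm d <= K + t * K).
  { unfold d. pose proof (vnorm_triangle _ u (vscal tau DT)). rewrite vnorm_scal, Habstau in H.
    assert (t * vnorm DT <= t * K) by (apply Rmult_le_compat_l; lra). lra. }
  assert (Hmain : vnorm d <= K + t * (w * vnorm d + t * K)).
  { assert (t * Rabs (f DT) <= t * (w * vnorm d + t * K)) by (apply Rmult_le_compat_l; lra). lra. }
  assert (Htw : t * w * vnorm d <= t * w * (K + t * K)).
  { apply Rmult_le_compat_l; [|exact Hdup]. apply Rmult_le_pos; lra. }
  assert (Hfin : K * (1 - eps + t * (1 - eta)) < K * (1 + t * w * (1 + t) + t * t)) by nra.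
  apply Rmult_lt_reg_l in Hfin; [|exact HK].
  assert (Hwe : w = 1 - e) by (unfold e; ring).
  rewrite Hwe in Hfin. unfold t, eta, eps in Hfin. clearbody e. clear - Hfin He.
  assert (0 < e * e) by nra. assert (0 < e * e * e) by nra. nra.
Qed.

Theorem theorem2p7 (X : NormedSpace) (Hcomplete : complete X)
  (Hnontriv : exists x : X, x <> vzero) (Hlush : lush X) :
  nonlinear_numerical_index_is X 1.
Proof.
  split.
  - intros r [T [_ [HL Hw]]]. exact (omega_ge Hlush Hnontriv T HL r Hw).
  - intros b Hb. apply Hb. clear Hb.
    destruct Hnontriv as [x0 Hx0].
    assert (Hd : vsub x0 vzero <> vzero) by (rewrite vsub_0r; exact Hx0).
    exists (fun x => x). split; [|split].
    + split; [reflexivity|]. exists 1. intros x y. lra.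
    + split.
      * intros r [x [y [Hxy ->]]]. pose proof (norm_pos x y Hxy).
        unfold Rdiv. rewrite Rinv_r by lra. lra.
      * intros b2 Hb2. apply Hb2. exists x0, (@vzero X). split; [exact Hx0|].
        pose proof (norm_pos0 _ Hd). unfold Rdiv. rewrite Rinv_r by lra. reflexivity.
    + assert (Hval : forall (x y : X) (F : X -> R), x <> y -> in_D (vsub x y) F ->
                 Rabs (F (vsub x y)) / vnorm (vsub x y) ^ 2 = 1).
      { intros x y F Hxy [_ [c [_ [H1 H2]]]]. rewrite H1, H2.
        pose proof (norm_pos x y Hxy).
        rewrite Rabs_pos_eq by (apply pow_le; lra). field. lra. }
      split.
      * intros r [x [y [F [Hxy [HF ->]]]]]. rewrite (Hval x y F Hxy HF). lra.
      * intros b2 Hb2. destruct (exists_in_D _ Hd) as [F HF].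
        rewrite <- (Hval x0 (@vzero X) F Hx0 HF). apply Hb2. exists x0, (@vzero X), F. auto.
Qed.
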